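(* Let $q$ be a power of a prime $p$ and let $n\ge 2$ be an integer such that every prime divisor of $n$ divides $p(q-1)$. Then $n$ is $\mathbb{F}_q$-practical.
   Context: A positive integer $n$ is $\mathbb{F}_q$-practical if for every integer $1\le k\le n-1$ the polynomial $x^n-1$ has a divisor of degree $k$ in $\mathbb{F}_q[x]$. *)

(* Defs.v *)
From HB Require Import structures.
From mathcomp Require Import all_boot all_order all_algebra all_field.
Set Implicit Arguments. Unset Strict Implicit. Unset Printing Implicit Defensive.
Import GRing.Theory.
Local Open Scope ring_scope.

(* n is F-practical: for every 1 <= k <= n-1, x^n - 1 has a divisor of degree k
   in F[x].  Degree k is expressed as size d = k.+1 (mathcomp's size = deg + 1). *)
Definition practical (F : fieldType) (n : nat) : Prop :=
  forall k : nat, (1 <= k <= n.-1)%N ->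
    exists d : {poly F}, (d %| 'X^n - 1) /\ size d = k.+1.

(* Main.v *)
Require Import Defs.
From HB Require Import structures.
From mathcomp Require Import all_boot all_order all_algebra all_field.
From mathcomp Require Import zify cyclic.
Set Implicit Arguments. Unset Strict Implicit. Unset Printing Implicit Defensive.
Import GRing.Theory.
Local Open Scope ring_scope.

Section S.
Variable F : fieldType.

Definition PP (a : nat) := forall k, (k <= a)%N ->
  exists d : {poly F}, d %| 'X^a - 1 /\ size d = k.+1.
Definition QQ (b : nat) := exists cs : seq F, size cs = b.-1 /\
  'X^b - 1 = ('X - 1) * \prod_(c <- cs) ('X - c%:P).

Lemma size_prodXa a (s : seq F) : (0 < a)%N ->
  size (\prod_(c <- s) ('X^a - c%:P)) = (a * size s).+1.
Proof.
move=> a0; elim: s => [|c s IH]; first by rewrite big_nil size_poly1 muln0.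
rewrite big_cons size_mul.
- by rewrite size_XnsubC // IH /=; lia.
- by rewrite -size_poly_eq0 size_XnsubC.
- by rewrite -size_poly_eq0 IH.
Qed.

Lemma PP1 : PP 1.
Proof.
case=> [|[|//]] _.
  by exists 1; rewrite dvd1p size_poly1.
by exists ('X^1 - 1); rewrite dvdpp size_XnsubC.
Qed.

Lemma PQ a b : (0 < a)%N -> (0 < b)%N -> PP a -> QQ b -> PP (a * b).
Proof.
move=> a0 b0 Pa [cs [szcs Eb]] k kab.
have E : 'X^(a * b) - 1 = ('X^a - 1) * \prod_(c <- cs) ('X^a - c%:P).
  have := congr1 (comp_poly ('X^a)) Eb.
  rewrite !rmorphB /= !rmorphM /= rmorph_prod /= rmorphXn /= comp_polyX.
  rewrite comp_polyC -exprM mulnC => ->; congr (_ * _).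
    by rewrite rmorphB /= comp_polyX rmorph1.
  by apply: eq_bigr => c _; rewrite rmorphB /= comp_polyX comp_polyC.
have [kE|klt] := eqVneq k (a * b)%N.
  by exists ('X^(a * b) - 1); rewrite dvdpp size_XnsubC ?kE ?muln_gt0 ?a0.
have kdef := divn_eq k a.
set j := (k %/ a)%N in kdef; set i := (k %% a)%N in kdef.
have ia : (i < a)%N by rewrite ltn_mod.
have jb : (j <= b.-1)%N.
  rewrite -ltnS prednK // ltn_divLR // mulnC ltn_neqAle klt kab //.
have [d [dd szd]] := Pa i (ltnW ia).
exists (d * \prod_(c <- take j cs) ('X^a - c%:P)); split.
  rewrite E; apply: dvdp_mul => //.
  rewrite -{2}(cat_take_drop j cs) big_cat /=; exact: dvdp_mulIl.
have szP : size (\prod_(c <- take j cs) ('X^a - c%:P)) = (a * j).+1.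
  by rewrite size_prodXa // size_take szcs; case: ltnP => // h; congr (_ * _).+1; apply/eqP; rewrite eqn_leq h jb.
rewrite size_mul.
- by rewrite szd szP /= kdef; lia.
- by rewrite -size_poly_eq0 szd.
- by rewrite -size_poly_eq0 szP.
Qed.


Lemma prod_nseq1 m : \prod_(c <- nseq m (1 : F)) ('X - c%:P) = ('X - 1) ^+ m.
Proof. by elim: m => [|m IH]; rewrite ?big_nil ?expr0 // big_cons IH exprS polyC1. Qed.

Lemma QQpchar p : p \in [pchar F] -> QQ p.
Proof.
move=> chP; have pP : prime p := pcharf_prime chP.
have chP' : p \in [pchar {poly F}] by rewrite pchar_poly.
exists (nseq p.-1 1); split; first by rewrite size_nseq.
rewrite prod_nseq1 -exprS prednK ?prime_gt0 //.
have := pFrobenius_autB_comm chP' (commr1 'X).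
by rewrite !pFrobenius_autE expr1n.
Qed.

Lemma QQprim r (z : F) : r.-primitive_root z -> QQ r.
Proof.
move=> zp; have r0 := prim_order_gt0 zp.
exists [seq z ^+ i | i <- index_iota 1 r]; split.
  by rewrite size_map size_iota subn1.
rewrite -(factor_Xn_sub_1 zp) big_ltn // expr0 big_map.
by [].
Qed.
End S.

Lemma finQQ (F : finFieldType) r : (0 < r)%N -> (r %| #|F|.-1)%N -> QQ F r.
Proof.
move=> r0 rd.
have q0 : (0 < #|F|.-1)%N by have := finNzRing_gt1 F; case: #|F| => [|[]].
pose rs := enum [pred x : F | x ^+ #|F|.-1 == 1].
have : has (#|F|.-1).-primitive_root rs.
  apply: has_prim_root => //.
  - by apply/allP => x; rewrite mem_enum unity_rootE.
  - exact: enum_uniq.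
  rewrite -cardE; apply: (@leq_trans #|predC1 (0 : F)|); first by rewrite cardC1.
  apply: subset_leq_card; apply/subsetP => x.
  rewrite !inE => x0; apply/eqP; apply: (mulfI x0); rewrite mulr1 -exprS.
  by rewrite prednK ?expf_card // ltnW // finNzRing_gt1.
case/hasP=> w _ wp.
exact: QQprim (dvdn_prim_root wp rd).
Qed.

Theorem theorem5p5 (p e : nat) (F : finFieldType) (n : nat)
  (hp : prime p) (he : (0 < e)%N) (hF : #|F| = (p ^ e)%N)
  (hn : (2 <= n)%N)
  (hdiv : forall r : nat, prime r -> (r %| n)%N -> (r %| p * (p ^ e).-1)%N) :
  practical F n.
Proof.
have chP := card_finPcharP hF hp.
suff H : forall m, (0 < m)%N ->
    (forall r, prime r -> (r %| m)%N -> (r %| p * (p ^ e).-1)%N) -> PP F m.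
  move=> k /andP[_ kn]; have [d [dd szd]] := H n (ltnW hn) hdiv k (leq_trans kn (leq_pred n)).
  by exists d.
elim/ltn_ind=> m IH m0 hm.
have [m1|m1] := leqP m 1.
  have -> : m = 1%N by apply/eqP; rewrite eqn_leq m1 m0.
  exact: PP1.
have rP := pdiv_prime m1; have rd := pdiv_dvd m.
set r := pdiv m in rP rd.
rewrite -(divnK rd); apply: PQ.
- by rewrite divn_gt0 ?prime_gt0 // dvdn_leq.
- exact: prime_gt0.
- apply: IH.
  + by rewrite ltn_Pdiv ?prime_gt1.
  + by rewrite divn_gt0 ?prime_gt0 // dvdn_leq.
  + by move=> s sP sd; apply: hm sP (dvdn_trans sd (@dvdn_div _ _ rd)).
- have := hm r rP rd; rewrite Euclid_dvdM //; case/orP=> h.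
    have -> : r = p by apply/eqP; rewrite -dvdn_prime2.
    exact: QQpchar.
  by apply: finQQ; rewrite ?prime_gt0 ?hF.
Qed.
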